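(* Let $K^{\mathsf{m}},K^{\mathsf{v}}$ be positive-definite kernels on $\mathcal{X}$ with RKHSs $\mathcal{H}^{\mathsf{m}},\mathcal{H}^{\mathsf{v}}$ and feature maps $\phi^{\mathsf{m}}_x=K^{\mathsf{m}}(x,\cdot)$, $\phi^{\mathsf{v}}_x=K^{\mathsf{v}}(x,\cdot)$. Let $(x_i,y_i)\in\mathcal{X}\times\mathbb{R}$, $i=1,\dots,n$, let $\mathbf{K}^{\mathsf{m}},\mathbf{K}^{\mathsf{v}}\in\mathbb{S}^{n\times n}$ be the kernel matrices $\mathbf{K}^{\mathsf{m}}_{ij}=K^{\mathsf{m}}(x_i,x_j)$, $\mathbf{K}^{\mathsf{v}}_{ij}=K^{\mathsf{v}}(x_i,x_j)$, with $i$-th columns $\mathsf{K}^{\mathsf{m}}_i,\mathsf{K}^{\mathsf{v}}_i$, and let $\gamma\ge0$. Consider the finite-dimensional program $$(\mathrm{P}_n)\quad\min_{\alpha\in\mathbb{R}^n,\ \mathbf{B}\in\mathbb{S}^{n\times n}}\ \gamma\langle\alpha,\mathbf{K}^{\mathsf{m}}\alpha\rangle+\operatorname{Tr}(\mathbf{K}^{\mathsf{v}}\mathbf{B})\quad\text{s.t.}\quad\langle\mathsf{K}^{\mathsf{v}}_i,\mathbf{B}\mathsf{K}^{\mathsf{v}}_i\rangle\ge\big(y_i-\langle\mathsf{K}^{\mathsf{m}}_i,\alpha\rangle\big)^2\ \forall i,\ \ \mathbf{B}\succeq0,$$ and the infinite-dimensional program $$(\mathrm{P}_\infty)\quad\min_{\beta\in\mathcal{H}^{\mathsf{m}},\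 \mathbf{A}:\mathcal{H}^{\mathsf{v}}\to\mathcal{H}^{\mathsf{v}}}\ \gamma\|\beta\|^2_{\mathcal{H}^{\mathsf{m}}}+\|\mathbf{A}\|_\star\quad\text{s.t.}\quad\langle\phi^{\mathsf{v}}_{x_i},\mathbf{A}\phi^{\mathsf{v}}_{x_i}\rangle_{\mathcal{H}^{\mathsf{v}}}\ge\big(y_i-\langle\phi^{\mathsf{m}}_{x_i},\beta\rangle_{\mathcal{H}^{\mathsf{m}}}\big)^2\ \forall i,\ \ \mathbf{A}\succeq0.$$ Then the two programs are equivalent: they have the same optimal value, the map $(\alpha,\mathbf{B})\mapsto(\beta,\mathbf{A})$ with $\beta=\sum_i\alpha_i\phi^{\mathsf{m}}_{x_i}$ and $\mathbf{A}=\sum_{i,j}\mathbf{B}_{ij}\,\phi^{\mathsf{v}}_{x_i}\otimes\phi^{\mathsf{v}}_{x_j}$ sends feasible points of $(\mathrm{P}_n)$ to feasible points of $(\mathrm{P}_\infty)$ with the same objective value, and $(\mathrm{P}_\infty)$ has an optimal solution of this form (in particular optimal solutions of $(\mathrm{P}_n)$ are mapped to optimal solutions of $(\mathrm{P}_\infty)$).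
   Context: $\|\mathbf{A}\|_\star$ is the nuclear (trace) norm; for $\mathbf{A}\succeq0$ it equals $\operatorname{Tr}(\mathbf{A})$. For $u,v\in\mathcal{H}$, $u\otimes v$ denotes the rank-one operator $h\mapsto\langle v,h\rangle_{\mathcal{H}}u$. $\mathbf{A}\succeq0$ means $\mathbf{A}$ is a positive semi-definite (self-adjoint) operator. *)

(* Defs.v *)
From HB Require Import structures.
From mathcomp Require Import all_boot all_order all_algebra.
From mathcomp Require Import all_classical all_reals all_analysis.
Set Implicit Arguments. Unset Strict Implicit. Unset Printing Implicit Defensive.
Import Order.TTheory GRing.Theory Num.Theory.
Local Open Scope classical_set_scope.
Local Open Scope ring_scope.

Section Defs.
Variables (R : realType).

Definition pd_kernel (X : Type) (K : X -> X -> R) : Prop :=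
  (forall x y, K x y = K y x) /\
  (forall (m : nat) (z : 'I_m -> X) (c : 'I_m -> R),
      0 <= \sum_(i < m) \sum_(j < m) c i * c j * K (z i) (z j)).

Definition is_hilbert (H : completeNormedModType R) (ip : H -> H -> R) : Prop :=
  [/\ forall u v, ip u v = ip v u,
      forall (a : R) u v w, ip (a *: u + v) w = a * ip u w + ip v w
    & forall u, `|u| ^+ 2 = ip u u].

(** [H] (with inner product [ip]) is the reproducing kernel Hilbert space of
    [K] on [X], with feature map [phi x = K(x, .)]: the elements of [H] are
    functions [X -> R] (via the injective linear map [ev]), [phi x] is the
    function [K x], and the reproducing property holds. *)
Definition is_RKHS (X : Type) (K : X -> X -> R)
    (H : completeNormedModType R) (ip : H -> H -> R)
    (ev : H -> X -> R) (phi : X -> H) : Prop :=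
  [/\ is_hilbert ip,
      forall (a : R) u v, ev (a *: u + v) = (fun x => a * ev u x + ev v x),
      injective ev,
      forall x, ev (phi x) = K x
    & forall x f, ip (phi x) f = ev f x].

Definition bounded_linear_op (H : completeNormedModType R) (A : H -> H) : Prop :=
  (forall (a : R) u v, A (a *: u + v) = a *: A u + A v) /\ continuous A.

Definition psd_op (H : completeNormedModType R) (ip : H -> H -> R) (A : H -> H) : Prop :=
  (forall u v, ip (A u) v = ip u (A v)) /\ (forall u, 0 <= ip u (A u)).

Definition orthonormal (H : completeNormedModType R) (ip : H -> H -> R) (e : seq H) : Prop :=
  forall i j, (i < size e)%N -> (j < size e)%N ->
    ip (nth 0 e i) (nth 0 e j) = (i == j)%:R.

(** Trace of a positive semidefinite operator (= its nuclear norm), possibly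
    [+oo]: the supremum over finite orthonormal families [e] of
    [sum_k <e_k, A e_k>] (equivalently the sum of [<e, A e>] over any
    orthonormal basis). *)
Definition psd_trace (H : completeNormedModType R) (ip : H -> H -> R) (A : H -> H) : \bar R :=
  ereal_sup [set (\sum_(u <- e) ip u (A u))%:E | e in [set e | orthonormal ip e]].

Definition rank_one (H : completeNormedModType R) (ip : H -> H -> R) (u v : H) : H -> H :=
  fun h => ip v h *: u.

Definition dotv (n : nat) (u v : 'cV[R]_n) : R := \sum_(i < n) u i 0 * v i 0.

Definition kmat (X : Type) (K : X -> X -> R) (n : nat) (x : 'I_n -> X) : 'M[R]_n :=
  \matrix_(i, j) K (x i) (x j).

Definition psd_mx (n : nat) (B : 'M[R]_n) : Prop :=
  B^T = B /\ (forall v : 'cV[R]_n, 0 <= dotv v (B *m v)).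

Definition Pn_feasible (n : nat) (Km Kv : 'M[R]_n) (y : 'I_n -> R)
    (alpha : 'cV[R]_n) (B : 'M[R]_n) : Prop :=
  (forall i : 'I_n,
     dotv (col i Kv) (B *m col i Kv) >= (y i - dotv (col i Km) alpha) ^+ 2)
  /\ psd_mx B.

Definition Pn_obj (n : nat) (gamma : R) (Km Kv : 'M[R]_n)
    (alpha : 'cV[R]_n) (B : 'M[R]_n) : R :=
  gamma * dotv alpha (Km *m alpha) + \tr (Kv *m B).

Definition Pn_value (n : nat) (gamma : R) (Km Kv : 'M[R]_n) (y : 'I_n -> R) : \bar R :=
  ereal_inf [set (Pn_obj gamma Km Kv p.1 p.2)%:E |
              p in [set p : 'cV[R]_n * 'M[R]_n | Pn_feasible Km Kv y p.1 p.2]].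

Definition Pn_optimal (n : nat) (gamma : R) (Km Kv : 'M[R]_n) (y : 'I_n -> R)
    (alpha : 'cV[R]_n) (B : 'M[R]_n) : Prop :=
  Pn_feasible Km Kv y alpha B /\
  (forall alpha' B', Pn_feasible Km Kv y alpha' B' ->
     Pn_obj gamma Km Kv alpha B <= Pn_obj gamma Km Kv alpha' B').

Definition Pinf_feasible (X : Type) (Hm Hv : completeNormedModType R)
    (ipm : Hm -> Hm -> R) (ipv : Hv -> Hv -> R)
    (phim : X -> Hm) (phiv : X -> Hv) (n : nat) (x : 'I_n -> X) (y : 'I_n -> R)
    (beta : Hm) (A : Hv -> Hv) : Prop :=
  [/\ bounded_linear_op A,
      forall i : 'I_n,
        ipv (phiv (x i)) (A (phiv (x i))) >= (y i - ipm (phim (x i)) beta) ^+ 2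
    & psd_op ipv A].

Definition Pinf_obj (Hm Hv : completeNormedModType R)
    (ipm : Hm -> Hm -> R) (ipv : Hv -> Hv -> R) (gamma : R)
    (beta : Hm) (A : Hv -> Hv) : \bar R :=
  (gamma * ipm beta beta)%:E + psd_trace ipv A.

Definition Pinf_value (X : Type) (Hm Hv : completeNormedModType R)
    (ipm : Hm -> Hm -> R) (ipv : Hv -> Hv -> R)
    (phim : X -> Hm) (phiv : X -> Hv) (n : nat) (x : 'I_n -> X) (y : 'I_n -> R)
    (gamma : R) : \bar R :=
  ereal_inf [set Pinf_obj ipm ipv gamma p.1 p.2 |
              p in [set p : Hm * (Hv -> Hv) |
                     Pinf_feasible ipm ipv phim phiv x y p.1 p.2]].

Definition Pinf_optimal (X : Type) (Hm Hv : completeNormedModType R)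
    (ipm : Hm -> Hm -> R) (ipv : Hv -> Hv -> R)
    (phim : X -> Hm) (phiv : X -> Hv) (n : nat) (x : 'I_n -> X) (y : 'I_n -> R)
    (gamma : R) (beta : Hm) (A : Hv -> Hv) : Prop :=
  Pinf_feasible ipm ipv phim phiv x y beta A /\
  (forall beta' A', Pinf_feasible ipm ipv phim phiv x y beta' A' ->
     (Pinf_obj ipm ipv gamma beta A <= Pinf_obj ipm ipv gamma beta' A')%E).

Definition map_beta (X : Type) (Hm : completeNormedModType R) (phim : X -> Hm)
    (n : nat) (x : 'I_n -> X) (alpha : 'cV[R]_n) : Hm :=
  \sum_(i < n) alpha i 0 *: phim (x i).

Definition map_A (X : Type) (Hv : completeNormedModType R) (ipv : Hv -> Hv -> R)
    (phiv : X -> Hv) (n : nat) (x : 'I_n -> X) (B : 'M[R]_n) : Hv -> Hv :=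
  fun h => \sum_(i < n) \sum_(j < n) B i j *: rank_one ipv (phiv (x i)) (phiv (x j)) h.

End Defs.

(* Main.v *)
Require Import Defs.
From HB Require Import structures.
From mathcomp Require Import all_boot all_order all_algebra.
From mathcomp Require Import all_classical all_reals all_analysis.
From mathcomp Require Import ring lra.
Import Order.TTheory GRing.Theory Num.Theory.
Local Open Scope classical_set_scope.
Local Open Scope ring_scope.

Set Implicit Arguments. Unset Strict Implicit. Unset Printing Implicit Defensive.


Section Hilb.
Variables (R : realType) (H : completeNormedModType R) (ip : H -> H -> R).
Hypothesis hH : is_hilbert ip.

Lemma ipC u v : ip u v = ip v u. Proof. by case: hH. Qed.
Lemma ipZDl a u v w : ip (a *: u + v) w = a * ip u w + ip v w.
Proof. by case: hH. Qed.
Lemma ipn u : `|u| ^+ 2 = ip u u. Proof. by case: hH. Qed.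
Lemma ipDl u v w : ip (u + v) w = ip u w + ip v w.
Proof. by have := ipZDl 1 u v w; rewrite scale1r mul1r. Qed.
Lemma ip0l w : ip 0 w = 0.
Proof.
have h := ipDl 0 0 w; rewrite addr0 in h.
by apply: (@addrI _ (ip 0 w)); rewrite addr0 -h.
Qed.
Lemma ipZl a u w : ip (a *: u) w = a * ip u w.
Proof. by have := ipZDl a u 0 w; rewrite addr0 ip0l addr0. Qed.
Lemma ipNl u w : ip (- u) w = - ip u w.
Proof. by rewrite -scaleN1r ipZl mulN1r. Qed.
Lemma ipBl u v w : ip (u - v) w = ip u w - ip v w.
Proof. by rewrite ipDl ipNl. Qed.
Lemma ip0r w : ip w 0 = 0. Proof. by rewrite ipC ip0l. Qed.
Lemma ipDr u v w : ip w (u + v) = ip w u + ip w v.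
Proof. by rewrite ipC ipDl !(ipC w). Qed.
Lemma ipZr a u w : ip w (a *: u) = a * ip w u.
Proof. by rewrite ipC ipZl ipC. Qed.
Lemma ipBr u v w : ip w (u - v) = ip w u - ip w v.
Proof. by rewrite ipC ipBl !(ipC w). Qed.
Lemma ipNr u w : ip w (- u) = - ip w u.
Proof. by rewrite ipC ipNl ipC. Qed.
Lemma ip_suml (I : Type) (r : seq I) (P : pred I) (F : I -> H) w :
  ip (\sum_(i <- r | P i) F i) w = \sum_(i <- r | P i) ip (F i) w.
Proof. by elim/big_rec2: _ => [|i y1 y2 _ <-]; rewrite ?ip0l ?ipDl. Qed.
Lemma ip_sumr (I : Type) (r : seq I) (P : pred I) (F : I -> H) w :
  ip w (\sum_(i <- r | P i) F i) = \sum_(i <- r | P i) ip w (F i).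
Proof. by rewrite ipC ip_suml; apply: eq_bigr => i _; rewrite ipC. Qed.
Lemma ip_ge0 u : 0 <= ip u u.
Proof. by rewrite -ipn exprn_ge0. Qed.
Lemma ip_eq0 u : ip u u = 0 -> u = 0.
Proof. by rewrite -ipn => /eqP; rewrite sqrf_eq0 normr_eq0 => /eqP. Qed.

Lemma ip_polar v h : ip v h = (`|v + h| ^+ 2 - `|v - h| ^+ 2) / 4.
Proof.
rewrite !ipn !ipDl !ipDr !ipNl !ipNr (ipC h v).
by field.
Qed.

Lemma ip_continuous v : continuous (fun h : H => ip v h : R^o).
Proof.
have -> : (fun h : H => ip v h : R^o) = (fun h => (`|v + h| ^+ 2 - `|v - h| ^+ 2) * 4^-1).
  by apply: funext => h; rewrite ip_polar.
move=> h.
apply: (@continuousM _ _ (fun h => `|v + h| ^+ 2 - `|v - h| ^+ 2) (fun=> 4^-1)); last first.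
  rewrite /prop_for /continuous_at. first [ apply: cvg_cst | exact: (@cvg_cst _ _ _ _ (4^-1 : R)) | (apply: cvg_near_cst; near=> z; done) | (apply/cvgrPdist_le => e e0; near=> z; by rewrite subrr normr0 ltW)].
have nc : forall f : H -> H, {for h, continuous f} -> {for h, continuous (fun z => `|f z| ^+ 2 : R^o)}.
  move=> f cf.
  have : {for h, continuous (fun z => `|f z| : R^o)}.
    apply: (continuous_comp cf).
    exact: norm_continuous.
  move=> c; rewrite /GRing.exp /=; exact: continuousM.
apply: continuousB; apply: nc.
  apply: continuousD; [exact: cvg_cst|exact: cvg_id].
apply: continuousB; [exact: cvg_cst|exact: cvg_id].
Unshelve. all: by end_near. Qed.

Lemma ipZ_continuous v u : continuous (fun h : H => (ip v h *: u : H)).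
Proof.
move=> h; apply: continuousZr_tmp; exact: ip_continuous.
Qed.

End Hilb.



Section Hilb2.
Variables (R : realType) (H : completeNormedModType R) (ip : H -> H -> R).
Hypothesis hH : is_hilbert ip.

Definition spn n (w : 'I_n -> H) (u : H) := exists c : 'I_n -> R, u = \sum_i c i *: w i.
Definition prj (f : seq H) (h : H) := \sum_(u <- f) ip u h *: u.

Lemma span0 n (w : 'I_n -> H) : spn w 0.
Proof. by exists (fun=> 0); rewrite big1 // => i _; rewrite scale0r. Qed.
Lemma spanD n (w : 'I_n -> H) u v : spn w u -> spn w v -> spn w (u + v).
Proof.
move=> [c ->] [d ->]; exists (fun i => c i + d i).
by rewrite -big_split; apply: eq_bigr => i _; rewrite scalerDl.
Qed.
Lemma spanZ n (w : 'I_n -> H) a u : spn w u -> spn w (a *: u).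
Proof.
move=> [c ->]; exists (fun i => a * c i).
by rewrite scaler_sumr; apply: eq_bigr => i _; rewrite scalerA.
Qed.
Lemma spanB n (w : 'I_n -> H) u v : spn w u -> spn w v -> spn w (u - v).
Proof. by move=> su sv; apply: spanD su _; rewrite -scaleN1r; apply: spanZ. Qed.
Lemma span_sum n (w : 'I_n -> H) (I : Type) (r : seq I) (P : pred I) (F : I -> H) :
  (forall i, P i -> spn w (F i)) -> spn w (\sum_(i <- r | P i) F i).
Proof.
move=> hF; elim/big_ind: _ => //; [exact: span0 | exact: spanD].
Qed.
Lemma span_gen n (w : 'I_n -> H) i : spn w (w i).
Proof.
exists (fun j => (j == i)%:R); rewrite (bigD1 i) //= eqxx scale1r big1 ?addr0 //.
by move=> j /negPf ->; rewrite scale0r.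
Qed.

Lemma projE f h : prj f h = \sum_(l < size f) ip (nth 0 f l) h *: nth 0 f l.
Proof. by rewrite /prj (big_nth 0) big_mkord. Qed.

Lemma ip_projl f a b :
  ip (prj f a) b = \sum_(l < size f) ip (nth 0 f l) a * ip (nth 0 f l) b.
Proof. by rewrite projE (ip_suml hH); apply: eq_bigr => l _; rewrite (ipZl hH). Qed.

Lemma ip_projr f a b :
  ip a (prj f b) = \sum_(l < size f) ip (nth 0 f l) b * ip (nth 0 f l) a.
Proof. by rewrite (ipC hH) ip_projl. Qed.

Lemma span_proj n (w : 'I_n -> H) f h :
  (forall l : 'I_(size f), spn w (nth 0 f l)) -> spn w (prj f h).
Proof. by move=> hs; rewrite projE; apply: span_sum => l _; apply: spanZ. Qed.

Lemma ortho_nth f : Defs.orthonormal ip f ->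
  forall l l' : 'I_(size f), ip (nth 0 f l) (nth 0 f l') = (l == l')%:R.
Proof. by move=> hf l l'; rewrite hf. Qed.

Lemma sum_delta m (c : 'I_m -> R) (l : 'I_m) :
  \sum_(l' < m) c l' * (l' == l)%:R = c l.
Proof.
rewrite (bigD1 l) //= eqxx mulr1 big1 ?addr0 //.
by move=> i /negPf ->; rewrite mulr0.
Qed.

Lemma sum_deltaZ m (F : 'I_m -> H) (l : 'I_m) :
  \sum_(l' < m) (l' == l)%:R *: F l' = F l.
Proof.
rewrite (bigD1 l) //= eqxx scale1r big1 ?addr0 //.
by move=> i /negPf ->; rewrite scale0r.
Qed.

Lemma ip_nth_proj f h : Defs.orthonormal ip f ->
  forall l : 'I_(size f), ip (nth 0 f l) (prj f h) = ip (nth 0 f l) h.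
Proof.
move=> hf l; rewrite ip_projr.
under eq_bigr do rewrite (ortho_nth hf).
exact: sum_delta.
Qed.

Lemma proj_nth f : Defs.orthonormal ip f ->
  forall l : 'I_(size f), prj f (nth 0 f l) = nth 0 f l.
Proof.
move=> hf l; rewrite projE.
under eq_bigr do rewrite (ortho_nth hf).
exact: sum_deltaZ.
Qed.

Lemma proj_rcons f g h : prj (rcons f g) h = prj f h + ip g h *: g.
Proof. by rewrite /prj big_rcons. Qed.

Lemma GS n (w : 'I_n -> H) : exists f : seq H,
  [/\ Defs.orthonormal ip f, forall l : 'I_(size f), spn w (nth 0 f l)
    & forall k, prj f (w k) = w k].
Proof.
elim: n w => [|n IH] w.
  exists [::]; split => //; last by case.
  by case.
have [f [hf sf pf]] := IH (fun j => w (widen_ord (leqnSn n) j)).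
have sub : forall u, spn (fun j => w (widen_ord (leqnSn n) j)) u -> spn w u.
  by move=> u [c ->]; apply: span_sum => j _; apply: spanZ; apply: span_gen.
set v := w ord_max.
set s := v - prj f v.
have sf' : forall l : 'I_(size f), spn w (nth 0 f l) by move=> l; apply: sub; apply: sf.
have ss : spn w s by apply: spanB (span_gen w ord_max) (span_proj _ sf').
have os : forall l : 'I_(size f), ip (nth 0 f l) s = 0.
  by move=> l; rewrite (ipBr hH) ip_nth_proj // subrr.
have kcase : forall k : 'I_n.+1, k = ord_max \/ exists j : 'I_n, k = widen_ord (leqnSn n) j.
  move=> k; have [klt|kge] := ltnP k n.
    by right; exists (Ordinal klt); apply: val_inj.
  left; apply: val_inj => /=; apply/eqP; rewrite eqn_leq kge -ltnS ltn_ord.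
  done.
have [s0|s0] := eqVneq (ip s s) 0.
  have s00 := ip_eq0 hH s0.
  have vp : prj f v = v by apply/eqP; rewrite eq_sym -subr_eq0 -/s s00.
  exists f; split => // k; case: (kcase k) => [->|[j ->]]; [exact: vp | exact: pf].
have ns : `|s| != 0.
  by apply: contraNneq s0 => h; rewrite -(ipn hH) h expr2 mulr0.
set g := `|s|^-1 *: s.
have gg : ip g g = 1.
  rewrite (ipZl hH) (ipZr hH) -(ipn hH) mulrA -expr2 -exprMn mulVf //.
  by rewrite expr1n.
have og : forall l : 'I_(size f), ip (nth 0 f l) g = 0.
  by move=> l; rewrite (ipZr hH) os mulr0.
exists (rcons f g); split.
- move=> i j; rewrite size_rcons !ltnS !nth_rcons => hi hj.
  rewrite leq_eqVlt in hi; rewrite leq_eqVlt in hj.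
  case/orP: hi => [/eqP ->|hi]; case/orP: hj => [/eqP ->|hj].
  + by rewrite ltnn eqxx gg.
  + by rewrite ltnn eqxx hj (ipC hH) (og (Ordinal hj)) gtn_eqF.
  + by rewrite ltnn eqxx hi (og (Ordinal hi)) ltn_eqF.
  + by rewrite hi hj hf.
- move=> l; rewrite nth_rcons.
  have hl0 : (l <= size f)%N.
    have h1 := ltn_ord l; have h2 : (l < (size f).+1)%N by rewrite -(size_rcons f g). done.
  move: hl0; rewrite leq_eqVlt => /orP [/eqP el|hl].
    by rewrite el ltnn eqxx; apply: spanZ.
  by rewrite hl; exact: (sf' (Ordinal hl)).
- move=> k; rewrite proj_rcons.
  have ogp : forall a, ip g (prj f a) = 0.
    move=> a; rewrite (ipC hH) ip_projl big1 // => l _.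
    by rewrite og mulr0.
  case: (kcase k) => [->|[j ->]].
    rewrite -/v.
    have -> : ip g v = `|s|.
      have -> : v = s + prj f v by rewrite /s subrK.
      rewrite (ipDr hH) ogp addr0 (ipZl hH) -(ipn hH).
      by rewrite expr2 mulrA mulVf // mul1r.
    by rewrite /g scalerA mulfV // scale1r /s addrC subrK.
  by rewrite -{2}(pf j) ogp scale0r addr0 pf.
Qed.

Lemma trpos m (b : 'I_m -> 'I_m -> R) :
  (forall c : 'I_m -> R, 0 <= \sum_i \sum_j c i * b i j * c j) ->
  forall w : 'I_m -> H, 0 <= \sum_i \sum_j b i j * ip (w i) (w j).
Proof.
move=> hb w; have [f [_ _ pf]] := GS w.
have -> : \sum_i \sum_j b i j * ip (w i) (w j) =
  \sum_(l < size f) \sum_i \sum_j ip (nth 0 f l) (w i) * b i j * ip (nth 0 f l) (w j).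
  rewrite [RHS]exchange_big; apply: eq_bigr => i _.
  rewrite [RHS]exchange_big; apply: eq_bigr => j _ /=.
  rewrite -{1}(pf i) ip_projl mulr_sumr; apply: eq_bigr => l _.
  ring.
by apply: sumr_ge0 => l _; apply: hb.
Qed.

End Hilb2.



Section Fwd.
Variables (R : realType) (X : Type) (K : X -> X -> R) (H : completeNormedModType R)
  (ip : H -> H -> R) (ev : H -> X -> R) (phi : X -> H).
Hypotheses (hK : pd_kernel K) (hR : is_RKHS K ip ev phi).
Variables (n : nat) (x : 'I_n -> X).

Let hH : is_hilbert ip. Proof. by case: hR. Qed.
Let Ksym a b : K a b = K b a. Proof. by case: hK. Qed.
Let rk a b : ip (phi a) (phi b) = K b a.
Proof. by case: hR => _ _ _ e1 e2; rewrite e2 e1. Qed.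

Lemma ip_beta k alpha :
  ip (phi (x k)) (map_beta phi x alpha) = dotv (col k (kmat K x)) alpha.
Proof.
rewrite /map_beta (ip_sumr hH) /dotv; apply: eq_bigr => i _.
by rewrite (ipZr hH) rk !mxE mulrC.
Qed.

Lemma ip_beta2 alpha :
  ip (map_beta phi x alpha) (map_beta phi x alpha) = dotv alpha (kmat K x *m alpha).
Proof.
rewrite {1}/map_beta (ip_suml hH) /dotv; apply: eq_bigr => i _.
rewrite (ipZl hH) ip_beta /dotv mxE; congr (_ * _).
by apply: eq_bigr => j _; rewrite !mxE Ksym.
Qed.

Lemma map_AE (B : 'M[R]_n) h : map_A ip phi x B h =
  \sum_i \sum_j (B i j * ip (phi (x j)) h) *: phi (x i).
Proof.
rewrite /map_A /rank_one; apply: eq_bigr => i _; apply: eq_bigr => j _.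
by rewrite scalerA.
Qed.

Lemma ip_map_A u (B : 'M[R]_n) h : ip u (map_A ip phi x B h) =
  \sum_i \sum_j B i j * ip (phi (x j)) h * ip u (phi (x i)).
Proof.
rewrite map_AE (ip_sumr hH); apply: eq_bigr => i _.
by rewrite (ip_sumr hH); apply: eq_bigr => j _; rewrite (ipZr hH).
Qed.

Lemma cont_sum (I : Type) (r : seq I) (F : I -> H -> H) :
  (forall i, continuous (F i)) -> continuous (fun h => \sum_(i <- r) F i h).
Proof.
move=> hF h; elim: r => [|i r IH].
  have -> : (fun h => \sum_(i <- [::]) F i h) = (fun=> 0).
    by apply: funext => z; rewrite big_nil.
  exact: cvg_cst.
have -> : (fun h => \sum_(j <- i :: r) F j h) = (fun h => F i h + \sum_(j <- r) F j h).
  by apply: funext => z; rewrite big_cons.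
exact: continuousD (hF i h) IH.
Qed.

Lemma map_A_bl (B : 'M[R]_n) : bounded_linear_op (map_A ip phi x B).
Proof.
split.
  move=> a u v; rewrite !map_AE scaler_sumr -big_split; apply: eq_bigr => i _.
  rewrite scaler_sumr -big_split; apply: eq_bigr => j _ /=.
  rewrite (ipDr hH) (ipZr hH) scalerA -scalerDl; congr (_ *: _); ring.
have -> : map_A ip phi x B =
    fun h => \sum_i \sum_j (ip (phi (x j)) h *: (B i j *: phi (x i))).
  apply: funext => h; rewrite map_AE; apply: eq_bigr => i _; apply: eq_bigr => j _.
  by rewrite scalerA mulrC.
apply: cont_sum => i; apply: cont_sum => j.
exact: (ipZ_continuous hH).
Qed.

Lemma map_A_feas (B : 'M[R]_n) k : ip (phi (x k)) (map_A ip phi x B (phi (x k))) =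
  dotv (col k (kmat K x)) (B *m col k (kmat K x)).
Proof.
rewrite ip_map_A /dotv; apply: eq_bigr => i _.
rewrite !mxE mulr_sumr; apply: eq_bigr => j _.
by rewrite !rk !mxE (Ksym (x k) (x j)); ring.
Qed.

Lemma psd_quad (B : 'M[R]_n) : psd_mx B -> forall c : 'I_n -> R,
  0 <= \sum_i \sum_j c i * B i j * c j.
Proof.
case=> _ hB c.
suff -> : \sum_i \sum_j c i * B i j * c j = dotv (\col_i c i) (B *m \col_i c i) by [].
rewrite /dotv; apply: eq_bigr => i _; rewrite !mxE mulr_sumr; apply: eq_bigr => j _.
by rewrite !mxE mulrA.
Qed.

Lemma psd_sym (B : 'M[R]_n) : psd_mx B -> forall i j, B j i = B i j.
Proof. by case=> hT _ i j; rewrite -{1}hT mxE. Qed.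

Lemma map_A_psd (B : 'M[R]_n) : psd_mx B -> psd_op ip (map_A ip phi x B).
Proof.
move=> hB; split.
  move=> u v; rewrite (ipC hH) !ip_map_A [RHS]exchange_big.
  apply: eq_bigr => i _; apply: eq_bigr => j _ /=.
  by rewrite (psd_sym hB i j) (ipC hH u) (ipC hH (phi (x i)) v); ring.
move=> u; rewrite ip_map_A.
have := psd_quad hB (fun i => ip (phi (x i)) u).
suff -> : \sum_i \sum_j ip (phi (x i)) u * B i j * ip (phi (x j)) u =
  \sum_i \sum_j B i j * ip (phi (x j)) u * ip u (phi (x i)) by [].
apply: eq_bigr => i _; apply: eq_bigr => j _.
by rewrite (ipC hH u); ring.
Qed.

Lemma trE (B : 'M[R]_n) : \tr (kmat K x *m B) =
  \sum_i \sum_j B i j * ip (phi (x i)) (phi (x j)).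
Proof.
rewrite [RHS]exchange_big /mxtrace; apply: eq_bigr => i _.
rewrite mxE; apply: eq_bigr => j _.
by rewrite !mxE rk mulrC.
Qed.

Lemma S_formula (B : 'M[R]_n) f :
  \sum_(u <- f) ip u (map_A ip phi x B u) =
  \sum_i \sum_j B i j * ip (prj ip f (phi (x i))) (phi (x j)).
Proof.
rewrite (big_nth 0) big_mkord.
under eq_bigr do rewrite ip_map_A.
rewrite exchange_big; apply: eq_bigr => i _.
rewrite exchange_big; apply: eq_bigr => j _ /=.
rewrite (ip_projl hH) mulr_sumr; apply: eq_bigr => l _.
by rewrite (ipC hH (phi (x j))); ring.
Qed.

Lemma ip_proj_swap f a b : ip a (prj ip f b) = ip (prj ip f a) b.
Proof.
rewrite (ip_projr hH) (ip_projl hH); apply: eq_bigr => l _; exact: mulrC.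
Qed.

Lemma ip_proj_proj f a b : Defs.orthonormal ip f ->
  ip (prj ip f a) (prj ip f b) = ip (prj ip f a) b.
Proof.
move=> hf; rewrite (ip_projl hH) [RHS](ip_projl hH); apply: eq_bigr => l _.
by rewrite (ip_nth_proj hH).
Qed.

Lemma T_ge_S (B : 'M[R]_n) f : psd_mx B -> Defs.orthonormal ip f ->
  \sum_(u <- f) ip u (map_A ip phi x B u) <=
  \sum_i \sum_j B i j * ip (phi (x i)) (phi (x j)).
Proof.
move=> hB hf; rewrite S_formula -subr_ge0 -sumrB.
have := trpos hH (psd_quad hB) (fun i => phi (x i) - prj ip f (phi (x i))).
suff -> : \sum_i \sum_j B i j *
    ip (phi (x i) - prj ip f (phi (x i))) (phi (x j) - prj ip f (phi (x j))) =
  \sum_i (\sum_j B i j * ip (phi (x i)) (phi (x j)) -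
          \sum_j B i j * ip (prj ip f (phi (x i))) (phi (x j))) by [].
apply: eq_bigr => i _; rewrite -sumrB; apply: eq_bigr => j _.
rewrite (ipBl hH) !(ipBr hH) ip_proj_proj // ip_proj_swap.
ring.
Qed.

Lemma S_attain (B : 'M[R]_n) f : (forall i, prj ip f (phi (x i)) = phi (x i)) ->
  \sum_(u <- f) ip u (map_A ip phi x B u) = \tr (kmat K x *m B).
Proof.
move=> pf; rewrite S_formula trE; apply: eq_bigr => i _.
by rewrite pf.
Qed.

Lemma map_A_trace (B : 'M[R]_n) : psd_mx B ->
  psd_trace ip (map_A ip phi x B) = (\tr (kmat K x *m B))%:E.
Proof.
move=> hB; apply/eqP; rewrite eq_le; apply/andP; split.
  apply: ge_ereal_sup => _ [f hf <-]; rewrite lee_fin trE; exact: T_ge_S.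
have [f [hf _ pf]] := GS hH (fun i => phi (x i)).
by apply: ereal_sup_ubound; exists f => //; rewrite S_attain.
Qed.

Lemma reduce_beta (beta : H) : exists alpha : 'cV[R]_n,
  (forall k, ip (phi (x k)) (map_beta phi x alpha) = ip (phi (x k)) beta) /\
  ip (map_beta phi x alpha) (map_beta phi x alpha) <= ip beta beta.
Proof.
have [f [hf sf pf]] := GS hH (fun i => phi (x i)).
have [c hc] := span_proj ip beta sf.
exists (\col_i c i).
have -> : map_beta phi x (\col_i c i) = prj ip f beta.
  by rewrite hc /map_beta; apply: eq_bigr => i _; rewrite mxE.
split.
  by move=> k; rewrite -{2}(pf k) ip_proj_swap.
set p := prj ip f beta.
set r := beta - p.
have eb : beta = p + r by rewrite /r addrC subrK.
have pr0 : ip p r = 0.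
  rewrite /p (ip_projl hH) big1 // => l _.
  by rewrite /r (ipBr hH) (ip_nth_proj hH) // subrr mulr0.
rewrite [in X in _ <= X]eb (ipDl hH) (ipDr hH p r p) (ipDr hH p r r) pr0 (ipC hH r p) pr0 addr0 add0r.
by rewrite lerDl (ip_ge0 hH).
Qed.

End Fwd.



Lemma bilinE (R : realType) p q (d : 'cV[R]_p) (Bm : 'M[R]_(p,q)) (c : 'cV[R]_q) :
  (d^T *m Bm *m c) 0 0 = \sum_i \sum_j d i 0 * Bm i j * c j 0.
Proof.
rewrite mxE; under eq_bigr do rewrite mxE mulr_suml.
rewrite exchange_big; apply: eq_bigr => i _; apply: eq_bigr => j _.
by rewrite mxE.
Qed.

Lemma dotv_mx (R : realType) n (u v : 'cV[R]_n) (B : 'M[R]_n) :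
  dotv u (B *m v) = (u^T *m B *m v) 0 0.
Proof.
rewrite bilinE /dotv; apply: eq_bigr => i _; rewrite mxE mulr_sumr.
by apply: eq_bigr => j _; rewrite mulrA.
Qed.

Lemma sum_delta2 (R : realType) m (F : 'I_m -> 'I_m -> R) l :
  \sum_l1 \sum_l2 (l == l1)%:R * F l1 l2 * (l2 == l)%:R = F l l.
Proof.
rewrite (bigD1 l) //= [X in _ + X]big1 ?addr0.
  rewrite (bigD1 l) //= [X in _ + X]big1 ?addr0; first by rewrite eqxx mul1r mulr1.
  by move=> i /negPf ->; rewrite mulr0.
move=> i hi; apply: big1 => j _.
by rewrite eq_sym (negPf hi) !mul0r.
Qed.

Section Red.
Variables (R : realType) (X : Type) (K : X -> X -> R) (H : completeNormedModType R)
  (ip : H -> H -> R) (ev : H -> X -> R) (phi : X -> H).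
Hypotheses (hK : pd_kernel K) (hR : is_RKHS K ip ev phi).
Variables (n : nat) (x : 'I_n -> X).

Let hH : is_hilbert ip. Proof. by case: hR. Qed.

Lemma reduce_A (A : H -> H) : bounded_linear_op A -> psd_op ip A ->
  exists B : 'M[R]_n, [/\ psd_mx B,
    forall k, ip (phi (x k)) (map_A ip phi x B (phi (x k))) =
              ip (phi (x k)) (A (phi (x k)))
  & ((\tr (kmat K x *m B))%:E <= psd_trace ip A)%E].
Proof.
case=> hl _ [hs hp].
have A0 : A 0 = 0.
  by have := hl (-1) 0 0; rewrite scaler0 addr0 scaleN1r addNr.
have AZ : forall a u, A (a *: u) = a *: A u.
  by move=> a u; have := hl a u 0; rewrite addr0 A0 addr0.
have AD : forall u v, A (u + v) = A u + A v.
  by move=> u v; have := hl 1 u v; rewrite !scale1r.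
have Asum : forall (I : Type) (r : seq I) (F : I -> H),
    A (\sum_(i <- r) F i) = \sum_(i <- r) A (F i).
  move=> I r F; elim: r => [|i r IH]; first by rewrite !big_nil A0.
  by rewrite !big_cons AD IH.
have [e [he se pe]] := GS hH (fun i => phi (x i)).
have [M hM] := choice se.
have [Mm defMm] : exists Mm : 'M[R]_(size e, n), Mm = \matrix_(l, i) M l i by eexists.
have [Am defAm] : exists Am : 'M[R]_(size e),
  Am = \matrix_(l, l') ip (nth 0 e l) (A (nth 0 e l')) by eexists.
have [B defB] : exists B : 'M[R]_n, B = Mm^T *m Am *m Mm by eexists.
have AmT : Am^T = Am.
  by apply/matrixP => l l'; rewrite defAm !mxE (ipC hH) hs.
have ipAcomb : forall w w' : 'cV[R]_(size e),
    ip (\sum_l w l 0 *: nth 0 e l) (A (\sum_l w' l 0 *: nth 0 e l)) =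
    \sum_l \sum_l' w l 0 * Am l l' * w' l' 0.
  move=> w w'; rewrite Asum (ip_suml hH); apply: eq_bigr => l _.
  rewrite (ipZl hH) (ip_sumr hH) mulr_sumr; apply: eq_bigr => l' _.
  by rewrite AZ (ipZr hH) defAm mxE; ring.
have ipE : forall u (l : 'I_(size e)), ip u (nth 0 e l) = \sum_i M l i * ip u (phi (x i)).
  by move=> u l; rewrite hM (ip_sumr hH); apply: eq_bigr => i _; rewrite (ipZr hH).
have KF : forall u h, ip u (map_A ip phi x B h) =
    \sum_(l < size e) \sum_(l' < size e) ip u (nth 0 e l) * Am l l' * ip (nth 0 e l') h.
  move=> u h; rewrite (ip_map_A hR).
  have [d defd] : exists d : 'cV[R]_n, d = \col_i ip u (phi (x i)) by eexists.
  have [c defc] : exists c : 'cV[R]_n, c = \col_j ip (phi (x j)) h by eexists.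
  transitivity ((d^T *m B *m c) 0 0).
    rewrite bilinE; apply: eq_bigr => i _; apply: eq_bigr => j _.
    by rewrite defd defc !mxE; ring.
  have -> : d^T *m B *m c = (Mm *m d)^T *m Am *m (Mm *m c).
    by rewrite defB trmx_mul !mulmxA.
  rewrite bilinE; apply: eq_bigr => l _; apply: eq_bigr => l' _.
  congr (_ * _ * _).
    by rewrite ipE mxE; apply: eq_bigr => i _; rewrite defd defMm !mxE.
  rewrite (ipC hH) ipE mxE; apply: eq_bigr => j _.
  by rewrite defc defMm !mxE (ipC hH h).
exists B; split.
- split.
    by rewrite defB !trmx_mul trmxK AmT mulmxA.
  move=> v; rewrite dotv_mx defB.
  have -> : v^T *m (Mm^T *m Am *m Mm) *m v = (Mm *m v)^T *m Am *m (Mm *m v).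
    by rewrite trmx_mul !mulmxA.
  rewrite bilinE -ipAcomb; exact: hp.
- move=> k; rewrite KF.
  have ek : prj ip e (phi (x k)) =
      \sum_(l < size e) (\col_(l0 < size e) ip (nth 0 e l0) (phi (x k))) l 0 *: nth 0 e l.
    by rewrite projE; apply: eq_bigr => l _; rewrite mxE.
  transitivity (ip (prj ip e (phi (x k))) (A (prj ip e (phi (x k))))); last by rewrite pe.
  rewrite ek ipAcomb; apply: eq_bigr => l _; apply: eq_bigr => l' _.
  by rewrite !mxE (ipC hH (phi (x k))).
- rewrite -(S_attain hR B pe).
  apply: (@le_trans _ _ ((\sum_(u <- e) ip u (A u))%:E)); last first.
    by apply: ereal_sup_ubound; exists e.
  rewrite lee_fin le_eqVlt; apply/orP; left; apply/eqP.
  rewrite (big_nth 0) big_mkord [RHS](big_nth 0) big_mkord.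
  apply: eq_bigr => l _; rewrite KF.
  under eq_bigr do under eq_bigr do rewrite !(ortho_nth he).
  by rewrite sum_delta2 defAm mxE.
Qed.

End Red.


Unset Implicit Arguments. Set Strict Implicit. Set Printing Implicit Defensive.

Theorem mainTheorem3 (R : realType) (X : Type)
  (Km Kv : X -> X -> R)
  (Hm Hv : completeNormedModType R)
  (ipm : Hm -> Hm -> R) (ipv : Hv -> Hv -> R)
  (evm : Hm -> X -> R) (evv : Hv -> X -> R)
  (phim : X -> Hm) (phiv : X -> Hv)
  (n : nat) (x : 'I_n -> X) (y : 'I_n -> R) (gamma : R) :
  pd_kernel Km -> pd_kernel Kv ->
  is_RKHS Km ipm evm phim -> is_RKHS Kv ipv evv phiv ->
  0 <= gamma ->
  let KKm := kmat Km x in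
  let KKv := kmat Kv x in
  [/\ Pn_value gamma KKm KKv y = Pinf_value ipm ipv phim phiv x y gamma,
      (forall (alpha : 'cV[R]_n) (B : 'M[R]_n),
         Pn_feasible KKm KKv y alpha B ->
         Pinf_feasible ipm ipv phim phiv x y
           (map_beta phim x alpha) (map_A ipv phiv x B) /\
         Pinf_obj ipm ipv gamma (map_beta phim x alpha) (map_A ipv phiv x B)
           = (Pn_obj gamma KKm KKv alpha B)%:E),
      (forall (alpha : 'cV[R]_n) (B : 'M[R]_n),
         Pn_optimal gamma KKm KKv y alpha B ->
         Pinf_optimal ipm ipv phim phiv x y gamma
           (map_beta phim x alpha) (map_A ipv phiv x B))
    & ((exists (beta : Hm) (A : Hv -> Hv),
          Pinf_optimal ipm ipv phim phiv x y gamma beta A) ->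
       exists (alpha : 'cV[R]_n) (B : 'M[R]_n),
         Pn_optimal gamma KKm KKv y alpha B /\
         Pinf_optimal ipm ipv phim phiv x y gamma
           (map_beta phim x alpha) (map_A ipv phiv x B))].
Proof.
move=> hKm hKv hRm hRv hg; cbv zeta.
have fwd : forall (alpha : 'cV[R]_n) (B : 'M[R]_n),
    Pn_feasible (kmat Km x) (kmat Kv x) y alpha B ->
    Pinf_feasible ipm ipv phim phiv x y (map_beta phim x alpha) (map_A ipv phiv x B) /\
    Pinf_obj ipm ipv gamma (map_beta phim x alpha) (map_A ipv phiv x B) =
      (Pn_obj gamma (kmat Km x) (kmat Kv x) alpha B)%:E.
  move=> alpha B [hc hB]; split.
    split; first exact: (map_A_bl hRv).
      by move=> i; rewrite (map_A_feas hKv hRv) (ip_beta hRm); exact: hc.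
    exact: (map_A_psd hRv).
  by rewrite /Pinf_obj /Pn_obj (ip_beta2 hKm hRm) (map_A_trace hRv) // EFinD.
have red : forall beta A,
    Pinf_feasible ipm ipv phim phiv x y beta A ->
    exists (alpha : 'cV[R]_n) (B : 'M[R]_n),
      Pn_feasible (kmat Km x) (kmat Kv x) y alpha B /\
      ((Pn_obj gamma (kmat Km x) (kmat Kv x) alpha B)%:E <=
        Pinf_obj ipm ipv gamma beta A)%E.
  move=> beta A [hbl hc hpsd].
  have [alpha [ha1 ha2]] := reduce_beta hRm x beta.
  have [B [hB hB1 hB2]] := reduce_A hRv x hbl hpsd.
  exists alpha, B; split.
    split => // i; have := hc i.
    by rewrite -ha1 (ip_beta hRm) -hB1 (map_A_feas hKv hRv).
  rewrite /Pn_obj /Pinf_obj EFinD; apply: leeD => //.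
  rewrite (ip_beta2 hKm hRm) in ha2.
  by rewrite lee_fin ler_wpM2l.
have part3 : forall (alpha : 'cV[R]_n) (B : 'M[R]_n),
    Pn_optimal gamma (kmat Km x) (kmat Kv x) y alpha B ->
    Pinf_optimal ipm ipv phim phiv x y gamma
      (map_beta phim x alpha) (map_A ipv phiv x B).
  move=> alpha B [hf hopt]; have [hf' he] := fwd _ _ hf; split => // beta' A' hf2.
  have [a2 [B2 [hf3 hle]]] := red _ _ hf2.
  rewrite he; apply: le_trans hle; rewrite lee_fin; exact: hopt.
split.
- rewrite /Pn_value /Pinf_value; apply/eqP; rewrite eq_le; apply/andP; split.
    apply: le_ereal_inf_tmp => _ [[beta A] hf <-].
    have [alpha [B [hf' hle]]] := red _ _ hf.
    apply: le_trans hle; apply: ereal_inf_lbound; by exists (alpha, B).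
  apply: le_ereal_inf_tmp => _ [[alpha B] hf <-].
  have [hf' he] := fwd _ _ hf.
  rewrite /= -he; apply: ereal_inf_lbound.
  by exists (map_beta phim x alpha, map_A ipv phiv x B).
- exact: fwd.
- exact: part3.
- move=> [beta [A [hf hopt]]].
  have [alpha [B [hfa hle]]] := red _ _ hf.
  have optn : Pn_optimal gamma (kmat Km x) (kmat Kv x) y alpha B.
    split => // a' B' hf'.
    have [hf'' he] := fwd _ _ hf'.
    rewrite -lee_fin; apply: le_trans hle _; rewrite -he; exact: hopt.
  by exists alpha, B; split => //; apply: part3.
Qed.
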